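(* Let $H$ be a complex Hilbert space and let $A,K\in B(H)$ be such that $A$ is positive and $(AK)^*$ is hyponormal. Then \[|\langle AKx,x\rangle|\leq \|K\|\,\langle Ax,x\rangle\] for all $x\in H$.
   Context: $B(H)$ denotes the algebra of bounded linear operators on $H$. An operator $A\in B(H)$ is positive if $\langle Ax,x\rangle\geq 0$ for all $x\in H$. An operator $T\in B(H)$ is hyponormal if $TT^*\leq T^*T$, i.e. $T^*T-TT^*$ is positive. *)

(* Defs.v *)
From HB Require Import structures.
From mathcomp Require Import all_boot all_order all_algebra.
From mathcomp Require Import complex.
From mathcomp Require Import classical_sets reals.

Set Implicit Arguments.
Unset Strict Implicit.
Unset Printing Implicit Defensive.
Import Order.TTheory GRing.Theory Num.Theory.
Local Open Scope ring_scope.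
Local Open Scope complex_scope.
Local Open Scope classical_set_scope.

Record is_inner_product (R : realType) (V : lmodType R[i])
    (ip : V -> V -> R[i]) : Prop := {
  ip_linear : forall (a : R[i]) (x y z : V), ip (a *: x + y) z = a * ip x z + ip y z;
  ip_conj : forall x y : V, ip y x = conjc (ip x y);
  ip_ge0 : forall x : V, 0 <= ip x x;     (* real and nonnegative in R[i] *)
  ip_definite : forall x : V, ip x x = 0 -> x = 0 }.

Definition ipnorm (R : realType) (V : lmodType R[i]) (ip : V -> V -> R[i]) (x : V) : R :=
  Num.sqrt (complex.Re (ip x x)).

Definition ip_complete (R : realType) (V : lmodType R[i]) (ip : V -> V -> R[i]) : Prop :=
  forall u : nat -> V,
    (forall e : R, 0 < e -> exists N, forall m n, (N <= m)%N -> (N <= n)%N ->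
        ipnorm ip (u m - u n) < e) ->
    exists l : V, forall e : R, 0 < e -> exists N, forall n, (N <= n)%N ->
        ipnorm ip (u n - l) < e.

Definition is_Hilbert (R : realType) (V : lmodType R[i]) (ip : V -> V -> R[i]) : Prop :=
  is_inner_product ip /\ ip_complete ip.

Definition bounded_op (R : realType) (V : lmodType R[i]) (ip : V -> V -> R[i])
    (T : V -> V) : Prop :=
  (forall (a : R[i]) (x y : V), T (a *: x + y) = a *: T x + T y) /\
  exists M : R, forall x, ipnorm ip (T x) <= M * ipnorm ip x.

Definition opnorm (R : realType) (V : lmodType R[i]) (ip : V -> V -> R[i])
    (T : V -> V) : R :=
  sup [set r : R | exists x : V, ipnorm ip x <= 1 /\ r = ipnorm ip (T x)].

Definition positive_op (R : realType) (V : lmodType R[i]) (ip : V -> V -> R[i])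
    (A : V -> V) : Prop :=
  forall x, 0 <= ip (A x) x.

Definition is_adjoint (R : realType) (V : lmodType R[i]) (ip : V -> V -> R[i])
    (T S : V -> V) : Prop :=
  forall x y, ip (T x) y = ip x (S y).

Definition hyponormal (R : realType) (V : lmodType R[i]) (ip : V -> V -> R[i])
    (T : V -> V) : Prop :=
  forall Tadj : V -> V, is_adjoint ip T Tadj ->
    positive_op ip (fun x => Tadj (T x) - T (Tadj x)).

(* Main.v *)
Require Import Defs.
From HB Require Import structures.
From mathcomp Require Import all_boot all_order all_algebra.
From mathcomp Require Import complex.
From mathcomp Require Import classical_sets reals.
From mathcomp Require Import ring lra.
Import Order.TTheory GRing.Theory Num.Theory.
Local Open Scope ring_scope.
Local Open Scope complex_scope.

Local Notation cRe := complex.Re.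
Local Notation cIm := complex.Im.

Section Cx.
Context {R : rcfType}.
Implicit Types a b : R[i].
Lemma ReD a b : cRe (a + b) = cRe a + cRe b. Proof. by case: a => ? ?; case: b => ? ?; simpc. Qed.
Lemma ImD a b : cIm (a + b) = cIm a + cIm b. Proof. by case: a => ? ?; case: b => ? ?; simpc. Qed.
Lemma ReN a : cRe (- a) = - cRe a. Proof. by case: a => ? ?; simpc. Qed.
Lemma ImN a : cIm (- a) = - cIm a. Proof. by case: a => ? ?; simpc. Qed.
Lemma ReB a b : cRe (a - b) = cRe a - cRe b. Proof. by case: a => ? ?; case: b => ? ?; simpc. Qed.
Lemma ImB a b : cIm (a - b) = cIm a - cIm b. Proof. by case: a => ? ?; case: b => ? ?; simpc. Qed.
Lemma ReM a b : cRe (a * b) = cRe a * cRe b - cIm a * cIm b. Proof. by case: a => ? ?; case: b => ? ?; simpc. Qed.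
Lemma ImM a b : cIm (a * b) = cRe a * cIm b + cIm a * cRe b.
Proof. case: a => ? ?; case: b => ? ?; simpc => /=; ring. Qed.
Lemma ReJ a : cRe (a^*) = cRe a. Proof. by case: a => ? ?; simpc. Qed.
Lemma ImJ a : cIm (a^*) = - cIm a. Proof. by case: a => ? ?; simpc. Qed.
Lemma ReC (k : R) : cRe k%:C = k. Proof. by []. Qed.
Lemma ImC (k : R) : cIm k%:C = 0. Proof. by []. Qed.
Lemma Re1 : cRe (1 : R[i]) = 1. Proof. by []. Qed.
Lemma Im1 : cIm (1 : R[i]) = 0. Proof. by []. Qed.
Lemma Re0 : cRe (0 : R[i]) = 0. Proof. by []. Qed.
Lemma Im0 : cIm (0 : R[i]) = 0. Proof. by []. Qed.
Lemma ge0E a : (0 <= a) = (cIm a == 0) && (0 <= cRe a).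
Proof. by rewrite lecE. Qed.
Lemma leE a b : (a <= b) = (cIm b == cIm a) && (cRe a <= cRe b).
Proof. by rewrite lecE. Qed.
Lemma cx_ext a b : cRe a = cRe b -> cIm a = cIm b -> a = b.
Proof. by case: a => ? ?; case: b => ? ? /= -> ->. Qed.
End Cx.
Notation cxE := (ReD, ImD, ReN, ImN, ReB, ImB, ReM, ImM, ReJ, ImJ, ReC, ImC, Re1, Im1, Re0, Im0).

Lemma conjcD {R : rcfType} (a b : R[i]) : (a + b)^* = a^* + b^*.
Proof. by apply: cx_ext; rewrite !cxE //; lra. Qed.
Lemma conjcM {R : rcfType} (a b : R[i]) : (a * b)^* = a^* * b^*.
Proof. by apply: cx_ext; rewrite !cxE //; lra. Qed.
Lemma conjcKK {R : rcfType} (a : R[i]) : a^*^* = a.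
Proof. by apply: cx_ext; rewrite !cxE //; lra. Qed.

Lemma quad_lemma {R : realFieldType} (F G n : R) : 0 <= n -> 0 <= F -> 0 <= G ->
  (forall t, 0 <= F - 2 * t * n + t ^+ 2 * n * G) -> n <= F * G.
Proof.
move=> n0 F0 G0 H.
have [->|nP] := eqVneq n 0; first by rewrite mulr_ge0.
have {nP} nP : 0 < n by rewrite lt_def nP.
have [G00|GP] := eqVneq G 0.
  have := H ((F + 1) / (2 * n)); rewrite G00 mulr0 addr0.
  have -> : 2 * ((F + 1) / (2 * n)) * n = F + 1.
    by field; rewrite lt0r_neq0.
  lra.
have {GP} GP : 0 < G by rewrite lt_def GP.
have := H (1 / G).
have -> : F - 2 * (1 / G) * n + (1 / G) ^+ 2 * n * G = F - n / G.
  by field; apply/lt0r_neq0.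
by rewrite subr_ge0 ler_pdivrMr // mulrC.
Qed.

Section Form.
Context {R : rcfType} {V : lmodType R[i]} (f : V -> V -> R[i]).
Hypothesis fl : forall (a : R[i]) (x y z : V), f (a *: x + y) z = a * f x z + f y z.
Hypothesis fc : forall x y : V, f y x = (f x y)^*.
Hypothesis fp : forall x : V, 0 <= f x x.

Lemma form_CS u v : cRe (f u v) ^+ 2 + cIm (f u v) ^+ 2 <= cRe (f u u) * cRe (f v v).
Proof.
set a := f u v.
have fr : forall b x y w, f x (b *: y + w) = b^* * f x y + f x w.
  by move=> b x y w; rewrite fc fl rmorphD rmorphM (fc y x) (fc w x).
have Fi : cIm (f u u) = 0 by have := fp u; rewrite ge0E => /andP[/eqP].
have Gi : cIm (f v v) = 0 by have := fp v; rewrite ge0E => /andP[/eqP].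
apply: (@quad_lemma R (cRe (f u u)) (cRe (f v v))).
- by rewrite addr_ge0 // sqr_ge0.
- by have := fp u; rewrite ge0E => /andP[].
- by have := fp v; rewrite ge0E => /andP[].
move=> t.
have := fp (((- t)%:C * a) *: v + u); rewrite ge0E => /andP[_].
rewrite fl !fr (fc u v) -/a.
move: Fi Gi; rewrite -/a.
case: a => a1 a2; case: (f u u) => F1 F2; case: (f v v) => G1 G2 /= _ ->.
move=> h; apply: le_trans h _; rewrite le_eqVlt; apply/orP; left; apply/eqP; ring.
Qed.
End Form.

Section IP.
Context {R : realType} {V : lmodType R[i]} (ip : V -> V -> R[i]) (hip : is_inner_product ip).

Let lin := ip_linear hip.
Let cj := ip_conj hip.

Lemma ipDl x y z : ip (x + y) z = ip x z + ip y z.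
Proof. by have := lin 1 x y z; rewrite scale1r mul1r. Qed.
Lemma ip0l z : ip 0 z = 0.
Proof.
have := ipDl 0 0 z; rewrite addr0 => /(congr1 (fun t => t - ip 0 z)).
by rewrite subrr addrK => <-.
Qed.
Lemma ipZl a x z : ip (a *: x) z = a * ip x z.
Proof. by have := lin a x 0 z; rewrite addr0 ip0l addr0. Qed.
Lemma ipNl x z : ip (- x) z = - ip x z.
Proof. by rewrite -scaleN1r ipZl mulN1r. Qed.
Lemma ipBl x y z : ip (x - y) z = ip x z - ip y z.
Proof. by rewrite ipDl ipNl. Qed.
Lemma ipDr x y z : ip x (y + z) = ip x y + ip x z.
Proof. by rewrite cj ipDl rmorphD (cj y x) (cj z x). Qed.
Lemma ip0r z : ip z 0 = 0.
Proof. by rewrite cj ip0l rmorph0. Qed.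
Lemma ipZr a x z : ip z (a *: x) = a^* * ip z x.
Proof. by rewrite cj ipZl rmorphM (cj x z). Qed.
Lemma ipNr x z : ip z (- x) = - ip z x.
Proof. by rewrite cj ipNl rmorphN (cj x z). Qed.
Lemma ipBr x y z : ip z (x - y) = ip z x - ip z y.
Proof. by rewrite ipDr ipNr. Qed.

Definition sqn x := cRe (ip x x).
Local Notation nrm := sqn.
Lemma ip_Im x : cIm (ip x x) = 0.
Proof. by have := ip_ge0 hip x; rewrite ge0E => /andP[/eqP]. Qed.
Lemma nrm_ge0 x : 0 <= sqn x.
Proof. by have := ip_ge0 hip x; rewrite ge0E => /andP[]. Qed.
Lemma ipxx x : ip x x = (nrm x)%:C.
Proof. by apply: cx_ext; rewrite ?ip_Im. Qed.
Lemma nrm0 x : nrm x = 0 -> x = 0.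
Proof. by move=> h; apply: (ip_definite hip); rewrite ipxx h. Qed.
Lemma nrm0v : nrm 0 = 0.
Proof. by rewrite /sqn ip0l. Qed.

Lemma CS x y : cRe (ip x y) ^+ 2 + cIm (ip x y) ^+ 2 <= nrm x * nrm y.
Proof. exact: (@form_CS _ _ ip lin cj (ip_ge0 hip) x y). Qed.

Lemma ReCS x y : cRe (ip x y) ^+ 2 <= nrm x * nrm y.
Proof. apply: le_trans (CS x y); rewrite lerDl; exact: sqr_ge0. Qed.

Lemma nrmD x y : nrm (x + y) = nrm x + nrm y + 2 * cRe (ip x y).
Proof.
rewrite /sqn ipDl !ipDr !cxE (cj x y) ReJ; ring.
Qed.

Lemma nrmB x y : nrm (x - y) = nrm x + nrm y - 2 * cRe (ip x y).
Proof.
rewrite /sqn ipBl !ipBr !cxE (cj x y) ReJ; ring.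
Qed.

Lemma nrm_add_le x y : nrm (x + y) <= 2 * nrm x + 2 * nrm y.
Proof.
rewrite nrmD; have := ReCS x y; have := nrm_ge0 x; have := nrm_ge0 y.
set r := cRe _; set a := nrm x; set b := nrm y => h1 h2 h3.
have h4 : 0 <= (a - b) ^+ 2 by apply: sqr_ge0.
have h5 : (2 * r) ^+ 2 <= (a + b) ^+ 2 by nra.
have [h6|h6] := leP (2 * r) (a + b); first by lra.
exfalso; nra.
Qed.

Lemma nrmZ (k : R) x : nrm (k%:C *: x) = k ^+ 2 * nrm x.
Proof. by rewrite /sqn ipZl ipZr !cxE /= ip_Im; ring. Qed.

Lemma ip_eq0 d : (forall w, ip w d = 0) -> d = 0.
Proof. by move=> h; apply: (ip_definite hip); apply: h. Qed.

End IP.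

Lemma sq_mono {R : realFieldType} (a b : R) : 0 <= a -> a <= b -> a ^+ 2 <= b ^+ 2.
Proof. by move=> a0 ab; rewrite !expr2; apply: ler_pM. Qed.

Lemma final_arith {R : realFieldType} (mu N L n E r1 r2 g d : R) :
  0 < mu -> 0 <= N -> 0 <= L -> 0 <= E -> 0 <= g -> 0 < d ->
  d <= mu / 2 -> d * (64 * (mu ^+ 2 + N) * (L + 1)) <= mu ^+ 4 ->
  mu - d <= mu * n -> r1 ^+ 2 <= N * E -> r2 ^+ 2 <= E -> E ^+ 2 <= L * d ^+ 2 ->
  mu ^+ 2 * n + E - 2 * mu * r2 + 2 * mu * g - 2 * r1 <= 0 -> False.
Proof.
move=> mu0 N0 L0 E0 g0 d0 dmu dW hn hr1 hr2 hE h.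
have h1 : mu ^+ 2 / 2 <= mu ^+ 2 * n.
  have : mu / 2 <= mu * n by lra.
  move=> h'; have := ler_wpM2l (ltW mu0) h'; rewrite !mulrA -expr2. lra.
have h2 : mu ^+ 2 / 2 <= 2 * mu * r2 + 2 * r1.
  have : 0 <= 2 * mu * g by rewrite !mulr_ge0 // ltW.
  lra.
have h2' : 0 <= mu ^+ 2 / 2 by rewrite divr_ge0 // sqr_ge0.
have h3 : (mu ^+ 2 / 2) ^+ 2 <= (2 * mu * r2 + 2 * r1) ^+ 2.
  exact: sq_mono.
have h4 : (2 * mu * r2 + 2 * r1) ^+ 2 <= 8 * (mu ^+ 2 * r2 ^+ 2) + 8 * r1 ^+ 2.
  have := sqr_ge0 (2 * mu * r2 - 2 * r1); nra.
have h5 : mu ^+ 2 * r2 ^+ 2 <= mu ^+ 2 * E by rewrite ler_wpM2l // sqr_ge0.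
set M := mu ^+ 2 + N.
have M0 : 0 < M by rewrite /M; have := exprn_gt0 2 mu0; lra.
have h6 : mu ^+ 4 / 4 <= 8 * M * E.
  have -> : mu ^+ 4 = (mu ^+ 2) ^+ 2 by rewrite -exprM.
  rewrite /M; nra.
have h60 : 0 <= mu ^+ 4 / 4 by rewrite divr_ge0 // exprn_ge0 // ltW.
have h7 : (mu ^+ 4 / 4) ^+ 2 <= (8 * M * E) ^+ 2.
  exact: sq_mono.
have M0' : 0 <= M := ltW M0.
have h8 : (8 * M * E) ^+ 2 <= 64 * M ^+ 2 * (L * d ^+ 2).
  have -> : (8 * M * E) ^+ 2 = 64 * M ^+ 2 * E ^+ 2 by ring.
  by rewrite ler_wpM2l // mulr_ge0 // sqr_ge0.
set W := 64 * M * (L + 1).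
have W0 : 0 <= W by rewrite /W !mulr_ge0 // ?ltW //; lra.
have h9 : (d * W) ^+ 2 <= (mu ^+ 4) ^+ 2.
  by apply: sq_mono => //; rewrite mulr_ge0 // ltW.
have h10 : 64 * (64 * M ^+ 2 * (L * d ^+ 2)) <= (d * W) ^+ 2.
  rewrite /W.
  have -> : (d * (64 * M * (L + 1))) ^+ 2 = 64 * (64 * M ^+ 2 * ((L + 1) ^+ 2 * d ^+ 2)) by ring.
  apply: ler_wpM2l => //; apply: ler_wpM2l; first by rewrite mulr_ge0 // sqr_ge0.
  apply: ler_wpM2r; first exact: sqr_ge0.
  nra.
have h11 : 0 < (mu ^+ 4) ^+ 2 by rewrite !exprn_gt0.
have : 64 * ((mu ^+ 4 / 4) ^+ 2) <= (mu ^+ 4) ^+ 2.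
  apply: le_trans h9; apply: le_trans h10; rewrite ler_wpM2l //.
  exact: le_trans h7 h8.
have -> : 64 * ((mu ^+ 4 / 4) ^+ 2) = 4 * (mu ^+ 4) ^+ 2 by field.
lra.
Qed.

Lemma conjC_real {R : rcfType} (k : R) : (k%:C)^* = k%:C.
Proof. by apply: cx_ext; rewrite !cxE // oppr0. Qed.

Section Lin.
Context {R : realType} {V : lmodType R[i]} (F : V -> V).
Hypothesis Flin : forall (a : R[i]) (x y : V), F (a *: x + y) = a *: F x + F y.
Lemma lin0 : F 0 = 0.
Proof.
have := Flin 1 0 0; rewrite !scale1r addr0 => /(congr1 (fun t => t - F 0)).
by rewrite subrr addrK => <-.
Qed.
Lemma linZ a x : F (a *: x) = a *: F x.
Proof. by have := Flin a x 0; rewrite addr0 lin0 addr0. Qed.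
Lemma linD x y : F (x + y) = F x + F y.
Proof. by have := Flin 1 x y; rewrite !scale1r. Qed.
Lemma linN x : F (- x) = - F x.
Proof. by rewrite -scaleN1r linZ scaleN1r. Qed.
Lemma linB x y : F (x - y) = F x - F y.
Proof. by rewrite linD linN. Qed.
End Lin.

Section Core.
Context {R : realType} {V : lmodType R[i]} (ip : V -> V -> R[i]) (hip : is_inner_product ip).
Context (P Q : V -> V).
Hypothesis Plin : forall (a : R[i]) (x y : V), P (a *: x + y) = a *: P x + P y.
Hypothesis Qlin : forall (a : R[i]) (x y : V), Q (a *: x + y) = a *: Q x + Q y.
Hypothesis Psym : forall x y, ip (P x) y = ip x (P y).
Hypothesis Qsym : forall x y, ip (Q x) y = ip x (Q y).
Hypothesis Qpos : forall x, 0 <= ip (Q x) x.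
Context (N : R).
Hypothesis N0 : 0 <= N.
Hypothesis PN : forall x, sqn ip (P x) <= N * sqn ip x.
Hypothesis QN : forall x, sqn ip (Q x) <= N * sqn ip x.
Hypothesis hPQ : forall x, sqn ip (P x) <= sqn ip (Q x).

Let cj := ip_conj hip.
Local Notation nrm := (sqn ip).

Lemma nrmN x : nrm (- x) = nrm x.
Proof. by rewrite /sqn (ipNl _ hip) (ipNr _ hip) opprK. Qed.

Let C x := P x - Q x.

Lemma Clin : forall (a : R[i]) (x y : V), C (a *: x + y) = a *: C x + C y.
Proof. by move=> a x y; rewrite /C Plin Qlin scalerBr opprD addrACA. Qed.
Lemma Csym x y : ip (C x) y = ip x (C y).
Proof. by rewrite /C (ipBl _ hip) (ipBr _ hip) Psym Qsym. Qed.
Let q x := cRe (ip (C x) x).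
Lemma qE x : q x = cRe (ip (P x) x) - cRe (ip (Q x) x).
Proof. by rewrite /q /C (ipBl _ hip) ReB. Qed.
Lemma Cim x : cIm (ip (C x) x) = 0.
Proof.
have := Csym x x; rewrite (cj (C x) x) => /(congr1 (@complex.Im R)); rewrite ImJ; lra.
Qed.
Lemma nrmC x : nrm (C x) <= 4 * N * nrm x.
Proof.
apply: le_trans (nrm_add_le _ hip _ _) _; rewrite nrmN.
have := PN x; have := QN x; lra.
Qed.
Lemma qZ (k : R) x : q (k%:C *: x) = k ^+ 2 * q x.
Proof.
rewrite /q (linZ _ Clin) (ipZl _ hip) (ipZr _ hip) !cxE Cim; ring.
Qed.
Lemma q0 : q 0 = 0.
Proof. by rewrite /q (ip0r _ hip). Qed.
Lemma qbound x : nrm x <= 1 -> q x <= 1 + 4 * N.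
Proof.
move=> hx.
have h1 := ReCS _ hip (C x) x.
have h2 := nrmC x.
have h3 := nrm_ge0 _ hip x.
have h4 : nrm (C x) * nrm x <= 4 * N * nrm x * nrm x.
  by rewrite ler_wpM2r.
have h5 : 4 * N * nrm x * nrm x <= 4 * N.
  have : nrm x * nrm x <= 1 by nra.
  move=> h; have := ler_wpM2l (mulr_ge0 (ler0n _ 4) N0) h. rewrite !mulrA mulr1. done.
rewrite /q; nra.
Qed.

Let E : set R := fun r => exists x, nrm x <= 1 /\ r = q x.
Lemma hsup : has_sup E.
Proof.
split; first by exists 0, 0; rewrite nrm0v // q0 ler01.
exists (1 + 4 * N) => r [x [hx ->]]; exact: qbound.
Qed.
Let mu := sup E.
Lemma ub x : nrm x <= 1 -> q x <= mu.
Proof. by move=> hx; apply: (sup_upper_bound hsup); exists x. Qed.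

Lemma normalize y : 0 < nrm y ->
  nrm ((Num.sqrt (nrm y))^-1%:C *: y) = 1 /\ ((Num.sqrt (nrm y))^-1) ^+ 2 = (nrm y)^-1.
Proof.
move=> hy.
have h : ((Num.sqrt (nrm y))^-1) ^+ 2 = (nrm y)^-1 by rewrite exprVn sqr_sqrtr // ltW.
split => //; rewrite (nrmZ _ hip) h mulVf //; exact: lt0r_neq0.
Qed.

Lemma qle y : q y <= mu * nrm y.
Proof.
have [h0|hy] := eqVneq (nrm y) 0.
  by rewrite (nrm0 _ hip _ h0) q0 (nrm0v _ hip) mulr0.
have {hy} hy : 0 < nrm y by rewrite lt_def hy (nrm_ge0 _ hip).
have [h1 h2] := normalize _ hy.
have hle : nrm (((Num.sqrt (nrm y))^-1)%:C *: y) <= 1 by rewrite h1.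
have := ub _ hle; rewrite qZ h2 mulrC -/(q y / nrm y) ler_pdivrMr //.
Qed.

Theorem sqrt_mono x0 : cRe (ip (P x0) x0) <= cRe (ip (Q x0) x0).
Proof.
rewrite -subr_le0 -qE; case: (leP (q x0) 0) => // hq; exfalso.
have n0 : 0 < nrm x0.
  rewrite lt_def (nrm_ge0 _ hip) andbT; apply/eqP => h0.
  by move: hq; rewrite (nrm0 _ hip _ h0) q0 ltxx.
have mu0 : 0 < mu.
  have := qle x0 => h; nra.
pose Pm y := mu%:C *: y - C y.
have Pmlin : forall (a : R[i]) (x y : V), Pm (a *: x + y) = a *: Pm x + Pm y.
  move=> a x y; rewrite /Pm Clin scalerDr !scalerBr !scalerA [a * _]mulrC.
  rewrite opprD addrACA; congr (_ + _); congr (_ - _); rewrite /C scalerBr //.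
have Pmsym : forall x y, ip (Pm x) y = ip x (Pm y).
  move=> x y; rewrite /Pm (ipBl _ hip) (ipBr _ hip) Csym (ipZl _ hip) (ipZr _ hip).
  congr (_ - _); congr (_ * _); apply: cx_ext; rewrite !cxE //; lra.
have PmRe : forall y, cRe (ip (Pm y) y) = mu * nrm y - q y.
  move=> y; rewrite /Pm (ipBl _ hip) (ipZl _ hip) !cxE (ip_Im _ hip); rewrite /sqn /q; lra.
have Pmpos : forall y, 0 <= ip (Pm y) y.
  move=> y; rewrite ge0E; apply/andP; split.
    by rewrite /Pm (ipBl _ hip) (ipZl _ hip) !cxE (ip_Im _ hip) Cim; apply/eqP; lra.
  by rewrite PmRe subr_ge0 qle.
pose L := 2 * mu ^+ 2 + 8 * N.
have L0 : 0 <= L by rewrite /L addr_ge0 // mulr_ge0 // sqr_ge0.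
have PmN : forall z, nrm (Pm z) <= L * nrm z.
  move=> z; apply: le_trans (nrm_add_le _ hip _ _) _.
  rewrite (nrmZ _ hip) nrmN; have := nrmC z; rewrite /L; lra.
have key : forall y, nrm (Pm y) ^+ 2 <= L * (mu * nrm y - q y) ^+ 2.
  move=> y.
  have fl : forall (a : R[i]) (x y z : V), ip (Pm (a *: x + y)) z = a * ip (Pm x) z + ip (Pm y) z.
    by move=> a x y' z; rewrite Pmlin (ipDl _ hip) (ipZl _ hip).
  have fc : forall x y, ip (Pm y) x = (ip (Pm x) y)^*.
    by move=> x y'; rewrite Pmsym cj.
  have hcs := @form_CS _ _ (fun u v => ip (Pm u) v) fl fc Pmpos y (Pm y).
  rewrite /= PmRe in hcs.
  set e := nrm (Pm y) in hcs *.
  set d' := mu * nrm y - q y in hcs *.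
  set X := cRe (ip (Pm (Pm y)) (Pm y)) in hcs.
  have he : e ^+ 2 <= d' * X.
    apply: le_trans hcs; rewrite /e /sqn lerDl; exact: sqr_ge0.
  have d'0 : 0 <= d' by rewrite /d' subr_ge0 qle.
  have X0 : 0 <= X by have := Pmpos (Pm y); rewrite ge0E => /andP[].
  have hX : X ^+ 2 <= L * e ^+ 2.
    apply: le_trans (ReCS _ hip _ _) _.
    rewrite expr2 mulrA; apply: ler_wpM2r; first exact: nrm_ge0.
    exact: PmN.
  have e0 : 0 <= e by exact: nrm_ge0.
  have [->|enz] := eqVneq e 0; first by rewrite expr0n /= mulr_ge0 // sqr_ge0.
  have ep : 0 < e ^+ 2 by rewrite exprn_gt0 // lt_def enz e0.
  have h1 : (e ^+ 2) ^+ 2 <= (d' * X) ^+ 2 by apply: sq_mono => //; exact: ltW.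
  have h2 : (d' * X) ^+ 2 <= d' ^+ 2 * (L * e ^+ 2).
    by rewrite exprMn ler_wpM2l // sqr_ge0.
  have h3 : e ^+ 2 * e ^+ 2 <= (L * d' ^+ 2) * e ^+ 2.
    rewrite -expr2; apply: le_trans h1 _; apply: le_trans h2 _.
    by rewrite le_eqVlt; apply/orP; left; apply/eqP; ring.
  by rewrite ler_pM2r in h3.
have M0 : 0 < 64 * (mu ^+ 2 + N) * (L + 1).
  rewrite !mulr_gt0 //; last by rewrite ltr_pwDr.
  by rewrite ltr_pwDl // exprn_gt0.
pose d := Num.min (mu / 2) (mu ^+ 4 / (64 * (mu ^+ 2 + N) * (L + 1))).
have d0 : 0 < d by rewrite lt_min; apply/andP; split; apply: divr_gt0 => //; exact: exprn_gt0.
have dmu : d <= mu / 2 by rewrite /d ge_min lexx.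
have dW : d * (64 * (mu ^+ 2 + N) * (L + 1)) <= mu ^+ 4.
  rewrite -ler_pdivlMr //; by rewrite /d ge_min lexx orbT.
have [r [x [hx ->]] hr] := sup_adherent d0 hsup.
rewrite -/mu in hr.
set e := Pm x.
have hCx : C x = mu%:C *: x - e by rewrite /e /Pm subKr.
have hPx : P x = Q x + C x by rewrite /C addrC subrK.
have hql := qle x.
have hE : nrm e ^+ 2 <= L * d ^+ 2.
  apply: le_trans (key x) _; rewrite ler_wpM2l //; apply: sq_mono.
    by rewrite subr_ge0.
  have : mu * nrm x <= mu by rewrite ler_piMr // ltW.
  lra.
clearbody e.
have hx0 := nrm_ge0 _ hip x.
have g0 : 0 <= cRe (ip (Q x) x) by have := Qpos x; rewrite ge0E => /andP[].
have Qx0 : cIm (ip (Q x) x) = 0 by have := Qpos x; rewrite ge0E => /andP[/eqP].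
have hA : nrm (C x) = mu ^+ 2 * nrm x + nrm e - 2 * (mu * cRe (ip x e)).
  by rewrite hCx (nrmB _ hip) (nrmZ _ hip) (ipZl _ hip) !cxE; ring.
have hB : cRe (ip (Q x) (C x)) = mu * cRe (ip (Q x) x) - cRe (ip (Q x) e).
  by rewrite hCx (ipBr _ hip) (ipZr _ hip) !cxE Qx0; ring.
have h := hPQ x.
rewrite hPx (nrmD _ hip) hA hB in h.
have hr1 : cRe (ip (Q x) e) ^+ 2 <= N * nrm e.
  apply: le_trans (ReCS _ hip _ _) _; apply: ler_wpM2r; first exact: nrm_ge0.
  apply: le_trans (QN x) _; rewrite ler_piMr //.
have hr2 : cRe (ip x e) ^+ 2 <= nrm e.
  apply: le_trans (ReCS _ hip _ _) _; rewrite ler_piMl // nrm_ge0 //.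
have hE0 := nrm_ge0 _ hip e.
have := @final_arith R mu N L (nrm x) (nrm e) (cRe (ip (Q x) e)) (cRe (ip x e)) (cRe (ip (Q x) x)) d.
move=> /(_ mu0 N0 L0 hE0 g0 d0 dmu dW) H; apply: H hr1 hr2 hE _.
  lra.
lra.
Qed.

End Core.

Theorem mainTheorem1 (R : realType) (V : lmodType R[i]) (ip : V -> V -> R[i])
  (hH : is_Hilbert ip) (A K : V -> V)
  (hA : bounded_op ip A) (hK : bounded_op ip K) (hApos : positive_op ip A)
  (AKadj : V -> V) (hadj : is_adjoint ip (fun x => A (K x)) AKadj)
  (hhypo : hyponormal ip AKadj) :
  forall x : V, `| ip (A (K x)) x | <= (opnorm ip K)%:C * ip (A x) x.
Proof.
case: hH => hip _.
case: hA => Alin [MA hMA]; case: hK => Klin [MK hMK].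
have cj := ip_conj hip.
set S := AKadj.
set T := fun x => A (K x).
have Asym : forall x y, ip (A x) y = ip x (A y).
  pose g x y := ip (A x) y - ip x (A y).
  have gxx : forall x, g x x = 0.
    move=> x; rewrite /g (cj (A x) x).
    have := hApos x; rewrite ge0E => /andP[/eqP hi _].
    by apply: cx_ext; rewrite !cxE // ?hi; lra.
  have gl : forall (a : R[i]) x y z, g (a *: x + y) z = a * g x z + g y z.
    by move=> a x y z; rewrite /g Alin !(ip_linear hip); ring.
  have gr : forall (a : R[i]) x y z, g z (a *: x + y) = a^* * g z x + g z y.
    by move=> a x y z; rewrite /g Alin !(ipDr _ hip) !(ipZr _ hip); ring.
  move=> x y; apply/eqP; rewrite -subr_eq0 -/(g x y); apply/eqP.
  have h1 := gxx (1 *: x + y).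
  rewrite gl gr gr !gxx in h1.
  have h2 := gxx ('i *: x + y).
  rewrite gl gr gr !gxx in h2.
  move: h1 h2; set u := g x y; set w := g y x.
  rewrite !rmorph1 !mulr0 !mul1r !add0r !addr0 => h1 h2.
  have hw : w = - u by apply/eqP; rewrite -addr_eq0 addrC h1.
  rewrite hw mulrN -mulrBl in h2.
  move/eqP: h2; rewrite mulf_eq0 => /orP[/eqP|/eqP //].
  move/(congr1 (@complex.Im R)); rewrite !cxE /= => hc.
  have : (0 : R) < 1 - - 1 by lra.
  by rewrite hc ltxx.
have hT : forall u v, ip (T u) v = ip u (S v) by exact: hadj.
have Tadj : is_adjoint ip S T.
  by move=> u v; rewrite (cj v (S u)) -hT (cj (T v) u).
have hyp := hhypo T Tadj.
have TS : forall x, sqn ip (T x) <= sqn ip (S x).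
  move=> x; have := hyp x; rewrite ge0E => /andP[_].
  rewrite (ipBl _ hip) ReB (hT (S x) x) (Tadj (T x) x) subr_ge0 => h; exact: h.
have AN : forall y, sqn ip (A y) <= MA ^+ 2 * sqn ip y.
  move=> y; have h := hMA y; rewrite /ipnorm in h.
  have := @sq_mono R _ _ (sqrtr_ge0 _) h.
  by rewrite sqr_sqrtr ?(nrm_ge0 _ hip) // exprMn sqr_sqrtr ?(nrm_ge0 _ hip).
set c := opnorm ip K.
pose EK : set R := fun r => exists x : V, ipnorm ip x <= 1 /\ r = ipnorm ip (K x).
have hc : c = sup EK by [].
have K0 : K 0 = 0 := lin0 _ Klin.
have ipn0 : ipnorm ip 0 = 0 by rewrite /ipnorm -/(sqn ip 0) (nrm0v _ hip) sqrtr0.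
have hsupK : has_sup EK.
  split; first by exists (ipnorm ip (K 0)), 0; rewrite ipn0 ler01.
  exists `|MK| => r [x [hx ->]].
  apply: le_trans (hMK x) _.
  have hx0 : 0 <= ipnorm ip x by exact: sqrtr_ge0.
  apply: le_trans (_ : `|MK| * ipnorm ip x <= _).
    by apply: ler_wpM2r => //; exact: ler_norm.
  by rewrite -[X in _ <= X]mulr1 ler_wpM2l.
have ubK : forall x, ipnorm ip x <= 1 -> ipnorm ip (K x) <= c.
  by move=> x hx; rewrite hc; apply: (sup_upper_bound hsupK); exists x.
have c0 : 0 <= c.
  by apply: le_trans (ubK 0 _); [exact: sqrtr_ge0 | rewrite ipn0 ler01].
have KN : forall y, sqn ip (K y) <= c ^+ 2 * sqn ip y.
  move=> y.
  have [h0|hy] := eqVneq (sqn ip y) 0.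
    by rewrite (nrm0 _ hip _ h0) K0 (nrm0v _ hip) mulr0.
  have {hy} hy : 0 < sqn ip y by rewrite lt_def hy (nrm_ge0 _ hip).
  have [h1 h2] := normalize ip hip _ hy.
  set k := (Num.sqrt (sqn ip y))^-1 in h1 h2.
  have := ubK (k%:C *: y).
  rewrite /ipnorm -/(sqn ip (k%:C *: y)) h1 sqrtr1 lexx => /(_ isT).
  rewrite (linZ _ Klin) -/(sqn ip (k%:C *: K y)) (nrmZ _ hip) h2 => h.
  have := @sq_mono R _ _ (sqrtr_ge0 _) h.
  rewrite sqr_sqrtr; last by rewrite mulr_ge0 // ?invr_ge0 (nrm_ge0 _ hip).
  by rewrite mulrC -/(sqn ip (K y) / sqn ip y) ler_pdivrMr // mulrC.
have SN : forall y, sqn ip (S y) <= c ^+ 2 * sqn ip (A y).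
  move=> y.
  have e1 : sqn ip (S y) = cRe (ip (K (S y)) (A y)).
    by rewrite /sqn -hT /T Asym.
  have h1 := ReCS _ hip (K (S y)) (A y).
  rewrite -e1 in h1.
  have h2 := KN (S y).
  have s0 := nrm_ge0 _ hip (S y).
  have a0 := nrm_ge0 _ hip (A y).
  have h3 : sqn ip (S y) ^+ 2 <= (c ^+ 2 * sqn ip (A y)) * sqn ip (S y).
    by apply: le_trans h1 _; rewrite mulrAC; apply: ler_wpM2r.
  have [->|snz] := eqVneq (sqn ip (S y)) 0; first by rewrite mulr_ge0 // sqr_ge0.
  have sp : 0 < sqn ip (S y) by rewrite lt_def snz s0.
  by rewrite expr2 ler_pM2r in h3.
have Slin : forall (a : R[i]) (x y : V), S (a *: x + y) = a *: S x + S y.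
  move=> a x y; apply/eqP; rewrite -subr_eq0; apply/eqP; apply: (ip_eq0 _ hip) => w.
  rewrite (ipBr _ hip) (ipDr _ hip) (ipZr _ hip) -!hT (ipDr _ hip) (ipZr _ hip).
  by rewrite subrr.
pose B x := S (K x).
have Blin : forall (a : R[i]) (x y : V), B (a *: x + y) = a *: B x + B y.
  by move=> a x y; rewrite /B Klin Slin.
have Bsym : forall x y, ip (B x) y = ip x (B y).
  by move=> x y; rewrite /B Tadj /T -Asym -/(T x) hT.
pose Q x := (c ^+ 2)%:C *: A x.
have Qlin : forall (a : R[i]) (x y : V), Q (a *: x + y) = a *: Q x + Q y.
  move=> a x y; rewrite /Q Alin scalerDr !scalerA [a * _]mulrC //.
have Qsym : forall x y, ip (Q x) y = ip x (Q y).
  move=> x y; rewrite /Q (ipZl _ hip) (ipZr _ hip) Asym; congr (_ * _).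
  by apply: cx_ext; rewrite !cxE //= oppr0.
have Aim : forall x, cIm (ip (A x) x) = 0.
  by move=> x; have := hApos x; rewrite ge0E => /andP[/eqP].
have Are : forall x, 0 <= cRe (ip (A x) x).
  by move=> x; have := hApos x; rewrite ge0E => /andP[].
have Qpos : forall x, 0 <= ip (Q x) x.
  move=> x; rewrite /Q (ipZl _ hip) ge0E !cxE Aim; apply/andP; split.
    by apply/eqP; lra.
  by have := Are x; have := sqr_ge0 c; nra.
have c4 : 0 <= c ^+ 4 by rewrite exprn_ge0.
have QE : forall x, sqn ip (Q x) = c ^+ 4 * sqn ip (A x).
  by move=> x; rewrite /Q (nrmZ _ hip) -exprM.
have BQ : forall x, sqn ip (B x) <= sqn ip (Q x).
  move=> x; rewrite QE; apply: le_trans (SN (K x)) _.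
  have := TS x; have := SN x; rewrite -/(T x) => h1 h2.
  have : c ^+ 2 * sqn ip (T x) <= c ^+ 2 * (c ^+ 2 * sqn ip (A x)).
    by apply: ler_wpM2l; [exact: sqr_ge0 | exact: le_trans h2 h1].
  by rewrite mulrA -exprD.
pose NN := c ^+ 4 * MA ^+ 2.
have NN0 : 0 <= NN by rewrite mulr_ge0 // sqr_ge0.
have QN : forall x, sqn ip (Q x) <= NN * sqn ip x.
  by move=> x; rewrite QE /NN -mulrA ler_wpM2l.
have BN : forall x, sqn ip (B x) <= NN * sqn ip x.
  by move=> x; apply: le_trans (BQ x) (QN x).
have mono := sqrt_mono ip hip B Q Blin Qlin Bsym Qsym Qpos NN NN0 BN QN BQ.
move=> x.
have hB : cRe (ip (B x) x) = cRe (ip (A (K x)) (K x)).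
  by rewrite /B Tadj (cj (T x) (K x)) ReJ.
have hQ : cRe (ip (Q x) x) = c ^+ 2 * cRe (ip (A x) x).
  by rewrite /Q (ipZl _ hip) !cxE Aim; ring.
have h1 := mono x; rewrite hB hQ in h1.
have fl : forall (a : R[i]) (x y z : V), ip (A (a *: x + y)) z = a * ip (A x) z + ip (A y) z.
  by move=> a x' y z; rewrite Alin (ip_linear hip).
have fc : forall x y, ip (A y) x = (ip (A x) y)^*.
  by move=> x' y; rewrite Asym cj.
have hcs := @form_CS _ _ (fun u v => ip (A u) v) fl fc hApos (K x) x.
rewrite /= in hcs.
set a := cRe (ip (A x) x) in h1 hcs.
have a0 : 0 <= a := Are x.
have hca : cRe (ip (A (K x)) x) ^+ 2 + cIm (ip (A (K x)) x) ^+ 2 <= (c * a) ^+ 2.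
  apply: le_trans hcs _; rewrite exprMn expr2 mulrA.
  by apply: ler_wpM2r.
have -> : ip (A x) x = a%:C by apply: cx_ext; rewrite ?Aim.
rewrite normc_def -rmorphM lecR.
rewrite -(ger0_norm (mulr_ge0 c0 a0)) -sqrtr_sqr ler_sqrt //.
exact: sqr_ge0.




Qed.
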